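(* Let $n$ be a positive integer and $g=3n+1$. If $G$ is a pure $(2n)$-sparse gapset of genus $g$, then $G$ is not pseudo-symmetric.
   Context: A gapset is a finite set $G\subset\mathbb{N}=\{1,2,\dots\}$ such that whenever $z\in G$ and $z=x+y$ with $x,y\in\mathbb{N}$, then $x\in G$ or $y\in G$; its genus is $g=\#G$. Writing $G=\{\ell_1<\dots<\ell_g\}$, the Frobenius number is $F(G)=\ell_g$; $G$ is pseudo-symmetric if $F(G)=2g-2$. $G$ is pure $\kappa$-sparse if $\ell_{i+1}-\ell_i\le\kappa$ for all $i$ with equality for some $i$. *)

(* Defs.v *)
From mathcomp Require Import all_boot.

(* A finite subset G of N = {1,2,...} is represented by the list of its
   elements in strictly increasing order: G = [:: l_1; ...; l_g]. *)

Definition is_gapset (G : seq nat) : Prop :=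
  sorted ltn G /\
  (forall z, z \in G -> 0 < z) /\
  (forall x y, 0 < x -> 0 < y -> x + y \in G -> x \in G \/ y \in G).

Definition genus (G : seq nat) : nat := size G.

(* Frobenius number: the largest element l_g (0 for the empty gapset). *)
Definition frobenius (G : seq nat) : nat := last 0 G.

Definition pseudo_symmetric (G : seq nat) : Prop :=
  frobenius G = 2 * genus G - 2.

Definition pure_sparse (kappa : nat) (G : seq nat) : Prop :=
  (forall i, i.+1 < size G -> nth 0 G i.+1 - nth 0 G i <= kappa) /\
  (exists i, i.+1 < size G /\ nth 0 G i.+1 - nth 0 G i = kappa).

(* Main.v *)
Require Import Defs.
From mathcomp Require Import all_boot.
From mathcomp Require Import zify.

Lemma nth_mono (G : seq nat) : sorted ltn G ->
  forall j k, j < k -> k < size G -> nth 0 G j < nth 0 G k.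
Proof.
move=> srt j k jk ks.
have := @sorted_ltn_nth _ ltn ltn_trans 0 G srt j k.
apply => //; rewrite inE; lia.
Qed.

Lemma mirror_count (k : nat) (p : pred nat) :
  count (fun x => p (k - x)) (iota 1 (k - 1)) = count p (iota 1 (k - 1)).
Proof.
have -> : count (fun x => p (k - x)) (iota 1 (k - 1))
        = count p (map (fun x => k - x) (iota 1 (k - 1))) by rewrite count_map.
have pe : perm_eq (map (fun x => k - x) (iota 1 (k - 1))) (iota 1 (k - 1)).
  2: by move/permP: pe.
apply: uniq_perm.
- rewrite map_inj_in_uniq ?iota_uniq //.
  move=> x y; rewrite !mem_iota => hx hy; lia.
- exact: iota_uniq.
- move=> y; apply/mapP/idP.
  + by case=> x; rewrite !mem_iota => hx ->; lia.
  + rewrite mem_iota => hy; exists (k - y); rewrite ?mem_iota; lia.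
Qed.

Lemma no_double (G : seq nat) (m : nat) : 0 < m -> is_gapset G ->
  size G = m + 1 -> (forall y, y \in G -> y <= 2 * m) -> 2 * m \in G ->
  m \in G ->
  forall x, 0 < x -> x < 2 * m -> x != m -> x \in G -> 2 * m - x \in G -> False.
Proof.
move=> m0 [srt [pos dec]] sz le2m in2m inm x x0 xm xnm xG yG.
set p := (fun y => y \in G).
set s := iota 1 (2 * m - 1).
have uG : uniq G by apply: (sorted_uniq ltn_trans ltnn).
have hsz : size G = count p (iota 1 (2 * m)).
  have pe : perm_eq G (filter p (iota 1 (2 * m))).
    apply: uniq_perm => //; first by rewrite filter_uniq ?iota_uniq.
    move=> y; rewrite mem_filter mem_iota /p.
    case yG': (y \in G) => //=.
    have := pos y yG'; have := le2m y yG'; lia.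
  by rewrite (perm_size pe) size_filter.
have hs : count p s = m.
  move: hsz; rewrite (_ : 2 * m = (2 * m - 1) + 1); last by lia.
  rewrite iotaD count_cat /= (_ : 1 + (2 * m - 1) = 2 * m); last by lia.
  rewrite /p in2m /= -/s; lia.
have hmir : count (fun y => p (2 * m - y)) s = m by rewrite /s mirror_count.
have hU : count (predU p (fun y => p (2 * m - y))) s = 2 * m - 1.
  rewrite -[RHS](size_iota 1) -count_predT; apply: eq_in_count => y.
  rewrite mem_iota => hy /=; rewrite /p.
  have := dec y (2 * m - y); rewrite (_ : y + (2 * m - y) = 2 * m); last by lia.
  case=> //; try lia.
  + by move=> ->.
  + by move=> ->; rewrite orbT.
have hI := count_predUI p (fun y => p (2 * m - y)) s.
rewrite hU hs hmir in hI.
have h1 : size (filter (predI p (fun y => p (2 * m - y))) s) = 1.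
  rewrite size_filter; lia.
have mf : m \in filter (predI p (fun y => p (2 * m - y))) s.
  rewrite mem_filter /= /p mem_iota (_ : 2 * m - m = m); last by lia.
  rewrite inm /=; lia.
have xf : x \in filter (predI p (fun y => p (2 * m - y))) s.
  rewrite mem_filter /= /p mem_iota xG yG /=; lia.
move: h1 mf xf; case: (filter _ _) => [|y [|z t]] //= _.
rewrite !inE => /eqP e1 /eqP e2.
by move: xnm; rewrite e1 e2 eqxx.
Qed.

Theorem mainTheorem7 (n : nat) (G : seq nat) :
  0 < n -> is_gapset G -> genus G = 3 * n + 1 ->
  pure_sparse (2 * n) G -> ~ pseudo_symmetric G.
Proof.
move=> n0 gap gen [bnd [i [hi hd]]] ps.
have [srt [pos dec]] := gap.
rewrite /genus in gen.
have hF : last 0 G = 2 * (3 * n).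
  move: ps; rewrite /pseudo_symmetric /frobenius /genus gen => ->; lia.
have F : 2 * (3 * n) \in G.
  by rewrite -hF -nth_last; apply: mem_nth; rewrite gen addn1.
have le6 : forall y, y \in G -> y <= 2 * (3 * n).
  move=> y /(nthP 0) [j hj <-]; rewrite -hF -nth_last.
  have ps1 : (size G).-1 = 3 * n by rewrite gen addn1.
  rewrite ps1 in hj *.
  case: (ltnP j (3 * n)) => hj'.
  - by apply: ltnW; apply: nth_mono => //; lia.
  - have hj2 : j < 3 * n + 1 by rewrite -gen.
    by rewrite (_ : j = 3 * n) //; lia.
have in3n : 3 * n \in G.
  by case: (dec (3 * n) (3 * n)) => //; try lia; rewrite (_ : 3 * n + 3 * n = 2 * (3 * n)) //; lia.
set a := nth 0 G i.
set b := nth 0 G i.+1.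
have ab : a < b by apply: nth_mono => //.
have hd' : b - a = 2 * n := hd.
have hb : b = a + 2 * n by lia.
have hi' : i.+1 < 3 * n + 1 by rewrite -gen.
have aG : a \in G by apply: mem_nth; exact: ltnW hi.
have bG : b \in G by apply: mem_nth; exact: hi.
have between : forall y, a < y -> y < b -> y \in G -> False.
  move=> y h1 h2 /(nthP 0) [j hj ej].
  have hj3 : j < 3 * n + 1 by rewrite -gen.
  case: (ltnP i j) => hij.
  - case: (ltnP i.+1 j) => hij2.
    + have := nth_mono G srt _ _ hij2 hj; rewrite ej -/b; lia.
    + have : j = i.+1 by lia.
      move=> ej'; rewrite ej' -/b in ej; lia.
  - case: (ltnP j i) => hij2.
    + have := nth_mono G srt _ _ hij2 (ltnW hi); rewrite ej -/a; lia.
    + have : j = i by lia.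
      move=> ej'; rewrite ej' -/a in ej; lia.
have small : forall k, 0 < k -> k < 2 * n -> k \in G.
  move=> k k0 k2.
  case: (dec (b - k) k) => //; try lia.
  - by rewrite (_ : b - k + k = b) //; lia.
  - move=> h; exfalso; apply: (between (b - k)) => //; lia.
have nd := @no_double G (3 * n) ltac:(lia) gap gen le6 F in3n.
have a1 : 2 * n <= a + 1.
  case: (ltnP (a + 1) (2 * n)) => // h.
  exfalso; apply: (between (a + 1)); try lia; apply: small; lia.
case: (ltnP a (2 * n)) => ha.
-
  have n2 : 2 * n \notin G by apply/negP => h; apply: (between (2 * n)) => //; lia.
  have e1 : 2 * n + 4 * n = 2 * (3 * n) by lia.
  have e2 : 2 * n + 2 * n = 4 * n by lia.
  have n4 : 4 * n \in G.
    have [h|//] := dec (2 * n) (4 * n) ltac:(lia) ltac:(lia) ltac:(by rewrite e1).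
    by rewrite h in n2.
  have [h|h] := dec (2 * n) (2 * n) ltac:(lia) ltac:(lia) ltac:(by rewrite e2).
  + by rewrite h in n2.
  + by rewrite h in n2.
- case: (ltnP a (3 * n)) => ha3.
  + by apply: (between (3 * n)) => //; lia.
  + case: (ltnP b (2 * (3 * n))) => hb6.
    * apply: (nd b) => //; try lia.
      apply: small; lia.
    * have ea : a = 4 * n by have := le6 b bG; lia.
      have e2 : 2 * n + 2 * n = a by lia.
      have e3 : 2 * (3 * n) - a = 2 * n by lia.
      apply: (nd a) => //; try lia.
      rewrite e3.
      by have [h|h] := dec (2 * n) (2 * n) ltac:(lia) ltac:(lia) ltac:(by rewrite e2).

Qed.
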